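(* If $H$ is a non-complete graph that has a universal vertex (a vertex adjacent to all other vertices), then $H$ is not an $\operatorname{IR}$-graph.
   Context: All graphs are finite and simple. For $G=(V,E)$, $D\subseteq V$, $v\in D$: $\operatorname{PN}(v,D)=N[v]-N[D-\{v\}]$ (closed neighbourhoods). $D$ is irredundant if $\operatorname{PN}(v,D)\neq\varnothing$ for all $v\in D$; $\operatorname{IR}(G)$ is the maximum size of an irredundant set; an $\operatorname{IR}(G)$-set is an irredundant set of that size. $G(\operatorname{IR})$ has the $\operatorname{IR}(G)$-sets as vertices, with $D\sim D'$ iff there exist $u\in D$, $v\in D'$ with $uv\in E(G)$ and $D'=(D-\{u\})\cup\{v\}$. A graph $H$ is an $\operatorname{IR}$-graph if $H\cong G(\operatorname{IR})$ for some graph $G$. *)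

(* Defs.v *)
(* A finite simple graph is a symmetric irreflexive
   relation e on a finType T. *)
From mathcomp Require Import all_boot.
Set Implicit Arguments. Unset Strict Implicit. Unset Printing Implicit Defensive.

Section IR.
Variables (T : finType) (e : rel T).

Definition cnbhd (v : T) : {set T} := [set x | (x == v) || e v x].
Definition cnbhds (S : {set T}) : {set T} := \bigcup_(y in S) cnbhd y.
Definition PN (v : T) (D : {set T}) : {set T} := cnbhd v :\: cnbhds (D :\ v).
Definition irredundant (D : {set T}) : bool := [forall v in D, PN v D != set0].
Definition IR : nat := \max_(D : {set T} | irredundant D) #|D|.
Definition IRset (D : {set T}) : bool := irredundant D && (#|D| == IR).
Definition IRadj (D D' : {set T}) : bool :=
  [exists u in D, exists v in D', e u v && (D' == (D :\ u) :|: [set v])].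
End IR.

Definition iso_to_IRgraph (V : finType) (h : rel V) (T : finType) (e : rel T) : Prop :=
  exists f : V -> {set T},
    injective f /\ (forall D, IRset e D <-> exists x, f x = D)
    /\ (forall x y, h x y = IRadj e (f x) (f y)).

Definition IRgraph (V : finType) (h : rel V) : Prop :=
  exists (T : finType) (e : rel T), symmetric e /\ irreflexive e /\ iso_to_IRgraph h e.

(* Main.v *)
Require Import Defs.
From mathcomp Require Import all_boot.

Set Implicit Arguments. Unset Strict Implicit. Unset Printing Implicit Defensive.

Lemma in_cn (T : finType) (e : rel T) x v : (x \in cnbhd e v) = (x == v) || e v x.
Proof. by rewrite inE. Qed.

Lemma cnC (T : finType) (e : rel T) : symmetric e ->
  forall x y, (x \in cnbhd e y) = (y \in cnbhd e x).
Proof. by move=> es x y; rewrite !in_cn eq_sym es. Qed.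

Lemma cn_refl (T : finType) (e : rel T) x : x \in cnbhd e x.
Proof. by rewrite in_cn eqxx. Qed.

Lemma PNP (T : finType) (e : rel T) v (D : {set T}) q :
  reflect (q \in cnbhd e v /\ forall y, y \in D -> y != v -> q \notin cnbhd e y)
          (q \in PN e v D).
Proof.
rewrite /PN /cnbhds; apply: (iffP idP).
- rewrite inE => /andP[nq qv]; split=> // y yD yv; apply/negP => qy.
  apply/negP: nq; apply/negPn; apply/bigcupP; exists y => //; by rewrite !inE yv yD.
- case=> qv H; rewrite inE qv andbT; apply/negP => /bigcupP[y yin qy].
  move: yin; rewrite !inE => /andP[yv yD]; by move: (H y yD yv); rewrite qy.
Qed.

Lemma irrP (T : finType) (e : rel T) (D : {set T}) :
  reflect (forall v, v \in D -> exists q, q \in PN e v D) (irredundant e D).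
Proof.
apply: (iffP forall_inP) => H v vD.
- by have/set0Pn := H v vD.
- by apply/set0Pn; exact: H.
Qed.

Lemma PN_self (T : finType) (e : rel T) q x (X : {set T}) :
  q \in PN e x X -> q \in X -> q = x.
Proof.
case/PNP => _ H qX; apply/eqP; apply/negPn/negP => qx.
by have := H q qX qx; rewrite cn_refl.
Qed.

Lemma PN_disj (T : finType) (e : rel T) q x y (X : {set T}) :
  q \in PN e x X -> q \in PN e y X -> y \in X -> x = y.
Proof.
move=> /PNP[_ H] /PNP[qy _] yX; apply/eqP; rewrite eq_sym; apply/negPn/negP => yx.
by move: (H y yX yx); rewrite qy.
Qed.

Lemma flip (T : finType) (e : rel T) (X : {set T}) (p : T -> T) : symmetric e ->
  {in X, forall x, p x \in PN e x X} ->
  irredundant e (p @: X) /\ #|p @: X| = #|X|.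
Proof.
move=> es Hp.
have inj : {in X &, injective p}.
  move=> x y xX yX pxy; apply: (@PN_disj _ e (p x) x y X) => //; first exact: Hp.
  by rewrite pxy; apply: Hp.
split; last exact: card_in_imset.
apply/irrP => v /imsetP[x xX ->]; exists x; apply/PNP; split.
  by rewrite (cnC es); case/PNP: (Hp x xX).
move=> y /imsetP[z zX ->] pzx.
have zx : x != z by apply: contraNneq pzx => ->.
rewrite (cnC es); case/PNP: (Hp z zX) => _ H; exact: H x xX zx.
Qed.

Definition pk (T : finType) (e : rel T) (X : {set T}) x := odflt x [pick y in PN e x X].

Lemma pkP (T : finType) (e : rel T) (X : {set T}) x :
  irredundant e X -> x \in X -> pk e X x \in PN e x X.
Proof.
move=> /irrP H xX; rewrite /pk; case: pickP => [y //|none].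
have [q qP] := H x xX; by have := none q; rewrite qP.
Qed.

Definition p2 (T : finType) (e : rel T) (X : {set T}) d1 q1 d2 q2 x :=
  if x == d1 then q1 else if x == d2 then q2 else pk e X x.

Lemma p2P (T : finType) (e : rel T) (X : {set T}) d1 q1 d2 q2 :
  irredundant e X -> q1 \in PN e d1 X -> q2 \in PN e d2 X ->
  {in X, forall x, p2 e X d1 q1 d2 q2 x \in PN e x X}.
Proof.
move=> iX h1 h2 x xX; rewrite /p2.
case: eqP => [->//|_]; case: eqP => [->//|_]; exact: pkP.
Qed.

Lemma irr_le (T : finType) (e : rel T) (W : {set T}) : irredundant e W -> #|W| <= IR e.
Proof. by move=> iW; rewrite /IR; apply: (@leq_bigmax_cond _ (fun D : {set T} => irredundant e D) (fun D => #|D|)). Qed.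

Definition universal (T : finType) (e : rel T) (D : {set T}) :=
  IRset e D /\ forall W, IRset e W -> W != D -> IRadj e D W.

Lemma near (T : finType) (e : rel T) (D W : {set T}) u1 u2 : universal e D ->
  IRset e W -> u1 \in W -> u2 \in W -> u1 \notin D -> u2 \notin D -> u1 = u2.
Proof.
case=> _ univ WIR.
case: (eqVneq W D) => [-> | WD]; first by move=> h; rewrite h.
have /existsP[u /andP[uD /existsP[v /andP[vW /andP[_ /eqP WE]]]]] := univ W WIR WD.
rewrite WE !inE => /orP[/andP[_ ->]//|/eqP->] /orP[/andP[_ ->]//|/eqP->] //.
Qed.

Lemma twoout (T : finType) (e : rel T) (D X : {set T}) d1 d2 q1 q2 : symmetric e ->
  universal e D -> IRset e X -> d1 \in X -> d2 \in X -> d1 != d2 ->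
  q1 \in PN e d1 X -> q2 \in PN e d2 X -> q1 \notin D -> q2 \notin D -> False.
Proof.
move=> es uD XIR d1X d2X d12 h1 h2 n1 n2.
case/andP: (XIR) => iX /eqP cX.
have Hp := p2P iX h1 h2.
have [iW cW] := flip es Hp.
set p := p2 e X d1 q1 d2 q2 in Hp iW cW.
have WIR : IRset e (p @: X) by rewrite /IRset iW cW cX eqxx.
have pd1 : p d1 = q1 by rewrite /p /p2 eqxx.
have pd2 : p d2 = q2 by rewrite /p /p2 eq_sym (negbTE d12) eqxx.
have i1 : q1 \in p @: X by rewrite -pd1; apply: imset_f.
have i2 : q2 \in p @: X by rewrite -pd2; apply: imset_f.
have q12 := near uD WIR i1 i2 n1 n2.
move: h1; rewrite q12 => h1.
have := PN_disj h1 h2 d2X; by move/eqP; rewrite (negbTE d12).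
Qed.

Lemma Mlem (T : finType) (e : rel T) (D A : {set T}) a a' : symmetric e ->
  universal e D -> IRset e A -> a \in D -> a' \notin D -> e a a' ->
  A = D :\ a :|: [set a'] ->
  forall d, d \in D -> d != a -> a' \notin cnbhd e d.
Proof.
move=> es uD AIR aD a'D eaa' AE d dD da; apply/negP => a'd.
case/andP: (AIR) => iA /eqP cA.
have dA : d \in A by rewrite AE !inE da dD.
have a'A : a' \in A by rewrite AE !inE eqxx orbT.
have a'nd : a' != d by apply: contraNneq a'D => ->.
have [q qP] := (elimT (irrP e A)) iA d dA.
have qa' : q \notin cnbhd e a' by case/PNP: qP => _ H; exact: H a' a'A a'nd.
have acn : a \in cnbhd e a' by rewrite in_cn es eaa' orbT.
have qD : q \notin D.
  apply/negP => qD; case: (eqVneq q a) => [qa | qna].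
    by move: qa'; rewrite qa acn.
  have qA : q \in A by rewrite AE !inE qna qD.
  have qd := PN_self qP qA.
  by move: qa'; rewrite qd (cnC es) a'd.
have claim : forall z, z \in A -> z != d -> z != a' -> z \in PN e z A.
  move=> z zA zd za'.
  have [r rP] := (elimT (irrP e A)) iA z zA.
  case: (boolP (r \in D)) => rD.
    have ra : r != a.
      apply/negP => /eqP ra; move: rP; rewrite ra => /PNP[_ H].
      have az : a' != z by rewrite eq_sym.
      by move: (H a' a'A az); rewrite acn.
    have rA : r \in A by rewrite AE !inE ra rD.
    by have rz := PN_self rP rA; rewrite -{1}rz.
  have dz : d != z by rewrite eq_sym.
  exfalso; exact: (twoout es uD AIR dA zA dz qP rP qD rD).
have qnA : q \notin A.
  rewrite AE !inE negb_or negb_and qD orbT /=.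
  by apply: contraNneq qa' => ->; rewrite cn_refl.
set W := q |: (A :\ d).
have iW : irredundant e W.
  apply/irrP => v /setU1P[-> | /setD1P[vd vA]].
    exists q; apply/PNP; split; first exact: cn_refl.
    move=> y /setU1P[->|/setD1P[yd yA]]; first by rewrite eqxx.
    move=> _; case/PNP: qP => _ H; exact: H y yA yd.
  exists v; apply/PNP; split; first exact: cn_refl.
  move=> y /setU1P[-> | /setD1P[yd yA]] yv.
    rewrite (cnC es); case/PNP: qP => _ H; exact: H v vA vd.
  case: (eqVneq y a') => [ya' | yna'].
    subst y. have va' : v != a' by rewrite eq_sym.
    by case/PNP: (claim v vA vd va') => _ H; exact: H a' a'A yv.
  rewrite (cnC es); case/PNP: (claim y yA yd yna') => _ H.
  by apply: H => //; rewrite eq_sym.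
have cW : #|W| = #|A|.
  rewrite /W cardsU1 (cardsD1 d A) dA !inE negb_and qnA orbT.
  by rewrite add1n.
have WIR : IRset e W by rewrite /IRset iW cW cA eqxx.
have qW : q \in W by rewrite !inE eqxx.
have a'W : a' \in W by rewrite !inE a'nd a'A orbT.
have qa := near uD WIR qW a'W qD a'D.
by move: qa'; rewrite qa cn_refl.
Qed.

Lemma adj_dec (T : finType) (e : rel T) (D A : {set T}) : irreflexive e ->
  IRset e D -> IRset e A -> IRadj e D A ->
  exists a a', [/\ a \in D, a' \notin D, e a a', a' \in A & A = D :\ a :|: [set a']].
Proof.
move=> ei DIR AIR /existsP[a /andP[aD /existsP[a' /andP[a'A /andP[eaa' /eqP AE]]]]].
exists a, a'; split=> //; apply/negP => a'D.
have a'a : a' != a by apply: contraTneq eaa' => ->; rewrite ei.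
have sub : A \subset D :\ a.
  apply/subsetP => z; rewrite AE !inE => /orP[//| /eqP ->]; by rewrite a'a a'D.
case/andP: DIR => _ /eqP cD; case/andP: AIR => _ /eqP cA.
move: (subset_leq_card sub); rewrite cA -cD (cardsD1 a D) aD add1n ltnn.
by [].
Qed.

Lemma final_contra (T : finType) (e : rel T) (D A B : {set T}) a a' b b' :
  symmetric e -> irreflexive e -> universal e D -> IRset e A -> IRset e B ->
  A != B -> ~~ IRadj e A B ->
  a \in D -> a' \notin D -> e a a' -> a' \in A -> A = D :\ a :|: [set a'] ->
  b \in D -> b' \notin D -> e b b' -> b' \in B -> B = D :\ b :|: [set b'] -> False.
Proof.
move=> es ei uD AIR BIR AB nAB aD a'D eaa' a'A AE bD b'D ebb' b'B BE.
have Ma := Mlem es uD AIR aD a'D eaa' AE.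
have Mb := Mlem es uD BIR bD b'D ebb' BE.
have DIR := uD.1; case/andP: (DIR) => iD /eqP cD.
have a'P : a' \in PN e a D.
  by apply/PNP; split; [rewrite in_cn eaa' orbT | exact: Ma].
have b'P : b' \in PN e b D.
  by apply/PNP; split; [rewrite in_cn ebb' orbT | exact: Mb].
case: (eqVneq a b) => [ab | ab]; last first.
  exact: (twoout es uD DIR aD bD ab a'P b'P a'D b'D).
subst b.
have a'b' : a' != b' by apply: contraNneq AB => ab'; rewrite AE BE ab'.
have nab : ~~ e a' b'.
  apply: contra nAB => eab; apply/existsP; exists a'; rewrite a'A /=.
  apply/existsP; exists b'; rewrite b'B eab /=.
  apply/eqP/setP => x; rewrite BE AE !inE.
  case: (eqVneq x a') => [->|xa]; first by rewrite (negbTE a'D) !andbF.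
  by rewrite orbF.
have Cself : forall z, z \in D -> z != a -> z \in PN e z D.
  move=> z zD za; have [r rP] := (elimT (irrP e D)) iD z zD.
  case: (boolP (r \in D)) => rD.
    by have rz := PN_self rP rD; rewrite -{1}rz.
  have az : a != z by rewrite eq_sym.
  exfalso; exact: (twoout es uD DIR aD zD az a'P rP a'D rD).
set W := b' |: (a' |: (D :\ a)).
have iW : irredundant e W.
  apply/irrP => v vW; exists v; apply/PNP; split; first exact: cn_refl.
  move=> y yW yv.
  move: vW yW yv => /setU1P[->|/setU1P[->|/setD1P[va vD]]]
                    /setU1P[->|/setU1P[->|/setD1P[ya yD]]] //; rewrite ?eqxx //.
  - by move=> _; rewrite in_cn negb_or eq_sym a'b' nab.
  - by move=> _; apply: Mb.
  - by move=> _; rewrite in_cn negb_or a'b' (es b') nab.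
  - by move=> _; apply: Ma.
  - by move=> _; rewrite (cnC es); apply: Mb.
  - by move=> _; rewrite (cnC es); apply: Ma.
  - move=> vy; case/PNP: (Cself v vD va) => _ H; apply: H => //; by rewrite eq_sym.
have cW : #|W| = #|D|.+1.
  have b'a' : (b' == a') = false by rewrite eq_sym (negbTE a'b').
  rewrite /W cardsU1 cardsU1 (cardsD1 a D) aD !inE b'a' (negbTE a'D) (negbTE b'D) !andbF.
  by [].
have := irr_le iW; by rewrite cW cD ltnn.
Qed.

Theorem proposition4p7 (V : finType) (h : rel V) :
  symmetric h -> irreflexive h ->
  (exists x y : V, x != y /\ ~~ h x y) ->
  (exists w : V, forall x, x != w -> h w x) ->
  ~ IRgraph h.
Proof.
move=> hsym hirr [x [y [xy nh]]] [w hw] [T [e [es [ei [f [finj [fIR fadj]]]]]]].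
have IRf : forall z, IRset e (f z) by move=> z; apply/fIR; exists z.
have uD : universal e (f w).
  split; first exact: IRf.
  move=> W /fIR[z <-] zw.
  have zw' : z != w by apply: contraNneq zw => ->.
  by rewrite -fadj; apply: hw.
have xw : x != w.
  apply/eqP => E; subst x.
  have yw : y != w by rewrite eq_sym.
  by move: nh; rewrite hw.
have yw : y != w.
  apply/eqP => E; subst y.
  by move: nh; rewrite hsym hw.
have adjx : IRadj e (f w) (f x) by rewrite -fadj; apply: hw.
have adjy : IRadj e (f w) (f y) by rewrite -fadj; apply: hw.
have AB : f x != f y by apply: contra xy => /eqP E; apply/eqP; exact: finj.
have nAB : ~~ IRadj e (f x) (f y) by rewrite -fadj.
have [a [a' [aD a'D eaa' a'A AE]]] := adj_dec ei (IRf w) (IRf x) adjx.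
have [b [b' [bD b'D ebb' b'B BE]]] := adj_dec ei (IRf w) (IRf y) adjy.
exact: (final_contra es ei uD (IRf x) (IRf y) AB nAB aD a'D eaa' a'A AE bD b'D ebb' b'B BE).
Qed.
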